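(* Let $\mathcal J$ be a generalized almost complex structure on a Courant algebroid $E$. (i) The endomorphism $\Pi_{\mathcal J}$ of $\Lambda^3E^*$ defined by $$(\Pi_{\mathcal J}\alpha)(u,v,w)=\tfrac14\big(\alpha(u,v,w)-\alpha(u,\mathcal Jv,\mathcal Jw)-\alpha(\mathcal Ju,v,\mathcal Jw)-\alpha(\mathcal Ju,\mathcal Jv,w)\big)$$ is a projector (i.e. $\Pi_{\mathcal J}^2=\Pi_{\mathcal J}$) with image the subbundle $\Lambda^3_{\mathcal J}E^*=\{\alpha\in\Lambda^3E^*:\alpha(\mathcal Ju,v,w)=\alpha(u,\mathcal Jv,w)=\alpha(u,v,\mathcal Jw)\ \forall u,v,w\}$. (ii) $\mathrm{im}\,\partial_{\mathcal J}=\ker\Pi_{\mathcal J}$.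
   Context: A Courant algebroid is a real vector bundle $E\to M$ with a nondegenerate symmetric bilinear form $\langle\cdot,\cdot\rangle$, a Dorfman bracket and an anchor satisfying the Courant algebroid axioms; only the bundle $E$ with $\langle\cdot,\cdot\rangle$ matters here. A generalized almost complex structure is a $\langle\cdot,\cdot\rangle$-orthogonal endomorphism $\mathcal J$ of $E$ with $\mathcal J^2=-\mathrm{Id}$. $\Lambda^{1,1}_{\mathcal J}E^*$ is the bundle of 2-forms $\beta$ on $E$ with $\beta(\mathcal Ju,\mathcal Jv)=\beta(u,v)$. Elements $\eta\in E^*\otimes\Lambda^{1,1}_{\mathcal J}E^*$ are written $\eta(u,v,w)$ (a 2-form in $(v,w)$ for each $u$), and $\partial_{\mathcal J}:E^*\otimes\Lambda^{1,1}_{\mathcal J}E^*\to\Lambda^3E^*$ is $(\partial_{\mathcal J}\eta)(u,v,w)=\eta(u,v,w)+\eta(w,u,v)+\eta(v,w,u)$. *)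

(* Defs.v *)
(* Fibrewise linear algebra on one fibre V of the Courant
   algebroid E (a finite-dimensional real vector space). *)
From HB Require Import structures.
From mathcomp Require Import all_boot all_order all_algebra.
From mathcomp Require Import reals.
Set Implicit Arguments. Unset Strict Implicit. Unset Printing Implicit Defensive.
Import Order.TTheory GRing.Theory Num.Theory.
Local Open Scope ring_scope.

Section Defs.
Variables (R : realType) (V : vectType R).

Definition courant_form (g : V -> V -> R) : Prop :=
  [/\ (forall c x y v, g (c *: x + y) v = c * g x v + g y v),
      (forall u v, g u v = g v u) &
      (forall u, (forall v, g u v = 0) -> u = 0)].

Definition gen_almost_complex (g : V -> V -> R) (J : {linear V -> V}) : Prop :=
  (forall u v, g (J u) (J v) = g u v) /\ (forall u, J (J u) = - u).

Definition is_2form (b : V -> V -> R) : Prop :=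
  [/\ (forall c x y v, b (c *: x + y) v = c * b x v + b y v),
      (forall c u x y, b u (c *: x + y) = c * b u x + b u y) &
      (forall u, b u u = 0)].

Definition Lambda11 (J : {linear V -> V}) (b : V -> V -> R) : Prop :=
  is_2form b /\ forall u v, b (J u) (J v) = b u v.

(* E^* (x) Lambda^{1,1}_J E^* : eta u is in Lambda^{1,1} for each u, linear in u *)
Definition in_E_Lambda11 (J : {linear V -> V}) (eta : V -> V -> V -> R) : Prop :=
  (forall c x y v w, eta (c *: x + y) v w = c * eta x v w + eta y v w) /\
  (forall u, Lambda11 J (eta u)).

Definition is_3form (a : V -> V -> V -> R) : Prop :=
  [/\ (forall c x y v w, a (c *: x + y) v w = c * a x v w + a y v w),
      (forall c u x y w, a u (c *: x + y) w = c * a u x w + a u y w),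
      (forall c u v x y, a u v (c *: x + y) = c * a u v x + a u v y),
      (forall u w, a u u w = 0) &
      (forall u v, a u v v = 0)].

Definition Lambda3J (J : {linear V -> V}) (a : V -> V -> V -> R) : Prop :=
  is_3form a /\
  forall u v w, a (J u) v w = a u (J v) w /\ a u (J v) w = a u v (J w).

Definition PiJ (J : {linear V -> V}) (a : V -> V -> V -> R) : V -> V -> V -> R :=
  fun u v w => 4^-1 * (a u v w - a u (J v) (J w) - a (J u) v (J w)
                       - a (J u) (J v) w).

Definition dJ (eta : V -> V -> V -> R) : V -> V -> V -> R :=
  fun u v w => eta u v w + eta w u v + eta v w u.

End Defs.

(* Main.v *)
Require Import Defs.
From HB Require Import structures.
From mathcomp Require Import all_boot all_order all_algebra.
From mathcomp Require Import reals.
From mathcomp Require Import ring lra.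
From Stdlib Require Import FunctionalExtensionality.
Import Order.TTheory GRing.Theory Num.Theory.
Local Open Scope ring_scope.

Definition and3_2 (P Q S : Prop) (h : [/\ P, Q & S]) : Q := let: And3 _ q _ := h in q.
Definition and3_3 (P Q S : Prop) (h : [/\ P, Q & S]) : S := let: And3 _ _ q := h in q.
Arguments and3_2 {P Q S}.
Arguments and3_3 {P Q S}.

Lemma lin0 (R : realType) (V : vectType R) (f : V -> R) :
  (forall c x y, f (c *: x + y) = c * f x + f y) ->
  [/\ f 0 = 0, (forall x, f (- x) = - f x) & (forall x y, f (x + y) = f x + f y)].
Proof.
move=> H.
have H0 : f 0 = 0 by have := H 1 0 0; rewrite scale1r addr0 mul1r; lra.
split => //.
- by move=> x; have := H (-1) x 0; rewrite addr0 H0 addr0 scaleN1r mulN1r.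
- by move=> x y; have := H 1 x y; rewrite scale1r mul1r.
Qed.

Arguments lin0 {R V f}.

Lemma f3_props (R : realType) (V : vectType R) (a : V -> V -> V -> R) :
  is_3form a ->
  [/\ (forall x v w, a (- x) v w = - a x v w),
      (forall x v w, a v (- x) w = - a v x w),
      (forall x v w, a v w (- x) = - a v w x),
      (forall x y z, a x y z = - a y x z) &
      (forall x y z, a x y z = - a x z y)].
Proof.
case=> H1 H2 H3 H4 H5.
have N1 v w := (and3_2 (lin0 (fun c x y => H1 c x y v w))).
have D1 v w := (and3_3 (lin0 (fun c x y => H1 c x y v w))).
have N2 u w := (and3_2 (lin0 (fun c x y => H2 c u x y w))).
have D2 u w := (and3_3 (lin0 (fun c x y => H2 c u x y w))).
have N3 u v := (and3_2 (lin0 (fun c x y => H3 c u v x y))).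
have D3 u v := (and3_3 (lin0 (fun c x y => H3 c u v x y))).
split.
- by move=> x v w; rewrite (N1 v w).
- by move=> x v w; rewrite (N2 v w).
- by move=> x v w; rewrite (N3 v w).
- move=> x y z; have := H4 (x + y) z.
  rewrite D1 !D2 !H4; lra.
- move=> x y z; have := H5 x (y + z).
  rewrite D3 !D2 !H5; lra.
Qed.

Arguments f3_props {R V a}.

Lemma f2_props (R : realType) (V : vectType R) (b : V -> V -> R) :
  is_2form b ->
  [/\ (forall x v, b (- x) v = - b x v),
      (forall x v, b v (- x) = - b v x) &
      (forall x y, b x y = - b y x)].
Proof.
case=> H1 H2 H3.
have N1 v := (and3_2 (lin0 (fun c x y => H1 c x y v))).
have D1 v := (and3_3 (lin0 (fun c x y => H1 c x y v))).
have N2 u := (and3_2 (lin0 (fun c x y => H2 c u x y))).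
have D2 u := (and3_3 (lin0 (fun c x y => H2 c u x y))).
split.
- by move=> x v; rewrite (N1 v).
- by move=> x v; rewrite (N2 v).
- move=> x y; have := H3 (x + y).
  rewrite D1 !D2 !H3; lra.
Qed.

Arguments f2_props {R V b}.

Theorem lemma3p1 (R : realType) (V : vectType R) (g : V -> V -> R)
    (J : {linear V -> V}) :
  courant_form g -> gen_almost_complex g J ->
  [/\ (forall a, is_3form a -> is_3form (PiJ J a)),
      (forall a, is_3form a ->
         forall u v w, PiJ J (PiJ J a) u v w = PiJ J a u v w),
      (forall a, is_3form a -> Lambda3J J (PiJ J a)),
      (forall a, Lambda3J J a ->
         exists b, is_3form b /\ forall u v w, PiJ J b u v w = a u v w) &
      (forall a,
         (exists eta, in_E_Lambda11 J eta /\
                      forall u v w, dJ eta u v w = a u v w) <->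
         (is_3form a /\ forall u v w, PiJ J a u v w = 0))].
Proof.
move=> _ [_ JJ].
have P3 : forall a, is_3form a -> is_3form (PiJ J a).
  move=> a Ha; have [N1 N2 N3 S12 S23] := f3_props Ha.
  case: Ha => H1 H2 H3 H4 H5; rewrite /PiJ; split.
  - by move=> c x y v w; rewrite !linearP /= !H1; ring.
  - by move=> c x y v w; rewrite !linearP /= !H2; ring.
  - by move=> c x y v w; rewrite !linearP /= !H3; ring.
  - move=> u w; rewrite !H4 (S12 u); lra.
  - move=> u v; rewrite !H5 (S23 (J u) v); lra.
split => //.
- move=> a Ha u v w; have [N1 N2 N3 _ _] := f3_props Ha.
  rewrite /PiJ !JJ !N1 !N2 !N3; lra.
- move=> a Ha; split; first exact: P3.
  have [N1 N2 N3 _ _] := f3_props Ha.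
  move=> u v w; rewrite /PiJ !JJ !N1 !N2 !N3; split; lra.
- move=> a [Ha HJ]; exists a; split => // u v w.
  have [N1 N2 N3 _ _] := f3_props Ha.
  have e1 : a u (J v) (J w) = - a u v w.
    by case: (HJ u v (J w)) => _ ->; rewrite JJ N3.
  have e2 : a (J u) v (J w) = - a u v w.
    by case: (HJ u v (J w)) => -> _; rewrite e1.
  have e3 : a (J u) (J v) w = - a u v w.
    by case: (HJ u (J v) w) => ->; rewrite JJ N2.
  rewrite /PiJ e1 e2 e3; lra.
move=> a; split.
- case=> eta [[H1 H11] Hea].
  have -> : a = dJ eta.
    by apply: functional_extensionality => u; apply: functional_extensionality => v;
       apply: functional_extensionality => w; rewrite Hea.
  have N1 v w := (and3_2 (lin0 (fun c x y => H1 c x y v w))).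
  have E u := f2_props (proj1 (H11 u)).
  have L u := proj2 (H11 u).
  have K : forall u y z, eta u (J y) z = - eta u y (J z).
    by move=> u y z; rewrite -(L u (J y)) JJ; case: (E u) => -> _ _.
  split.
  + rewrite /dJ; split.
    * by move=> c x y v w; rewrite !H1; case: (H11 w) => [[A _ _] _];
         case: (H11 v) => [[_ B _] _]; rewrite A B; ring.
    * by move=> c u x y w; case: (H11 u) => [[A _ _] _];
         case: (H11 w) => [[_ B _] _]; rewrite A B !H1; ring.
    * by move=> c u v x y; case: (H11 u) => [[_ B _] _];
         case: (H11 v) => [[A _ _] _]; rewrite A B !H1; ring.
    * move=> u w; case: (H11 w) => [[_ _ Z] _]; rewrite Z.
      case: (E u) => _ _ ->; lra.
    * move=> u v; case: (H11 u) => [[_ _ Z] _]; rewrite Z.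
      case: (E v) => _ _ ->; lra.
  + move=> u v w; rewrite /PiJ /dJ !L.
    have e1 := K (J w) u v; have e2 := K (J v) w u;
    have e3 := K (J u) v w.
    lra.
- case=> Ha HP.
  have [N1 N2 N3 S12 S23] := f3_props Ha.
  case: Ha => H1 H2 H3 H4 H5.
  exists (fun u v w => 4^-1 * (a u v w + a u (J v) (J w))); split.
  + split.
    * by move=> c x y v w; rewrite !H1; ring.
    * move=> u; split; last by move=> v w; rewrite !JJ N2 N3 opprK; ring.
      split.
      - by move=> c x y v; rewrite !linearP /= !H2; ring.
      - by move=> c u' x y; rewrite !linearP /= !H3; ring.
      - by move=> v; rewrite !H5; ring.
  + move=> u v w; rewrite /dJ.
    have := HP u v w; rewrite /PiJ => h.
    have c1 : forall x y z, a x y z = a y z x.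
      by move=> x y z; rewrite S12 S23 opprK.
    have := c1 w u v; have := c1 u v w; have := c1 w (J u) (J v);
    have := c1 (J u) v (J w).
    lra.
Qed.
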